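(* Let $C$ be a cone in $\mathbb{R}^n$. Assume $X$ and $Y$ are nonempty closed decomposably $C$-antichain-convex subsets of $\mathbb{R}^n$, $Y$ is bounded and $X\cap Y=\emptyset$. (1) If $X$ is $C$-upward, then $X$ and $Y$ are strictly separated. (2) If $X$ is $C$-downward, then $X$ and $Y$ are strictly separated.
   Context: A cone in $\mathbb{R}^n$ is a subset $C$ with $\lambda C\subseteq C$ for all $\lambda>0$ (possibly empty, need not contain $0$). $S$ is $C$-antichain-convex iff for all $x,y\in S$ and $\lambda\in[0,1]$ with $y-x\notin C\cup(-C)$ one has $\lambda x+(1-\lambda)y\in S$; $S$ is decomposably $C$-antichain-convex iff it is a Minkowski sum of finitely many $C$-antichain-convex sets. $S$ is $C$-upward iff $S+C\subseteq S$; $C$-downward iff $S-C\subseteq S$. $X$ and $Y$ are strictly separated iff there is a linear functional $f$ on $\mathbb{R}^n$ with $\sup f[X]<\inf f[Y]$. *)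

(* Defs.v *)
From HB Require Import structures.
From mathcomp Require Import all_boot all_order all_algebra.
From mathcomp Require Import all_classical all_reals all_analysis.
Set Implicit Arguments. Unset Strict Implicit. Unset Printing Implicit Defensive.
Import Order.TTheory GRing.Theory Num.Theory.
Import numFieldNormedType.Exports.
Local Open Scope classical_set_scope.
Local Open Scope ring_scope.

(* A cone: closed under multiplication by positive scalars (may be empty,
   need not contain 0). *)
Definition is_cone (R : realType) (n : nat) (C : set 'rV[R]_n) : Prop :=
  forall (l : R) (c : 'rV[R]_n), 0 < l -> C c -> C (l *: c).

Definition antichain_convex (R : realType) (n : nat)
    (C S : set 'rV[R]_n) : Prop :=
  forall (x y : 'rV[R]_n) (l : R), S x -> S y -> 0 <= l <= 1 ->
    ~ (C (y - x) \/ C (- (y - x))) ->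
    S (l *: x + (1 - l) *: y).

Definition minkowski_sum (R : realType) (n k : nat)
    (F : 'I_k -> set 'rV[R]_n) : set 'rV[R]_n :=
  [set x | exists p : 'I_k -> 'rV[R]_n,
             (forall i, F i (p i)) /\ x = \sum_(i < k) p i].

Definition decomp_antichain_convex (R : realType) (n : nat)
    (C S : set 'rV[R]_n) : Prop :=
  exists (k : nat) (F : 'I_k -> set 'rV[R]_n),
    (forall i, antichain_convex C (F i)) /\ S = minkowski_sum F.

Definition upward (R : realType) (n : nat) (C S : set 'rV[R]_n) : Prop :=
  forall x c, S x -> C c -> S (x + c).

Definition downward (R : realType) (n : nat) (C S : set 'rV[R]_n) : Prop :=
  forall x c, S x -> C c -> S (x - c).

Definition strictly_separated (R : realType) (n : nat)
    (X Y : set 'rV[R]_n) : Prop :=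
  exists f : {linear 'rV[R]_n -> R^o},
    (ereal_sup [set (f x)%:E | x in X] < ereal_inf [set (f y)%:E | y in Y])%E.

(* Main.v *)
Require Import Defs.
From HB Require Import structures.
From mathcomp Require Import all_boot all_order all_algebra.
From mathcomp Require Import all_classical all_reals all_analysis.
From mathcomp Require Import ring lra.
Import Order.TTheory GRing.Theory Num.Theory.
Import numFieldNormedType.Exports.
Local Open Scope classical_set_scope.
Local Open Scope ring_scope.

Section Ana.
Variables (R : realType) (n : nat).

Definition dot (u v : 'rV[R]_n) : R^o := \sum_j u ord0 j * v ord0 j.
Definition q (v : 'rV[R]_n) : R := dot v v.

Lemma dot_lin u : linear (dot u).
Proof.
move=> a v w; rewrite /dot scaler_sumr -big_split; apply: eq_bigr => j _.
by rewrite !mxE /GRing.scale /=; ring.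
Qed.

HB.instance Definition _ u := GRing.isLinear.Build R 'rV[R]_n R^o *:%R (dot u) (dot_lin u).

Lemma dotBr u v w : dot u (v - w) = dot u v - dot u w.
Proof. by rewrite linearB. Qed.

Lemma dotNl u v : dot (- u) v = - dot u v.
Proof. by rewrite /dot -sumrN; apply: eq_bigr => j _; rewrite mxE mulNr. Qed.

Lemma q_expand a b (t : R) : q (a + t *: b) = q a + 2 * t * dot a b + t ^+ 2 * q b.
Proof.
rewrite /q /dot mulr_sumr mulr_sumr -!big_split; apply: eq_bigr => j _.
rewrite !mxE /=; ring.
Qed.

Lemma q_ge0 (v : 'rV[R]_n) : 0 <= q v.
Proof. by apply: sumr_ge0 => j _; rewrite -expr2 sqr_ge0. Qed.

Lemma q_ge_coord (v : 'rV[R]_n) j : v ord0 j * v ord0 j <= q v.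
Proof.
rewrite /q /dot (bigD1 j) //= lerDl; apply: sumr_ge0 => i _.
by rewrite -expr2 sqr_ge0.
Qed.

Lemma q_eq0 (v : 'rV[R]_n) : q v = 0 -> v = 0.
Proof.
move=> /eqP; rewrite psumr_eq0; last by move=> j _; rewrite -expr2 sqr_ge0.
move=> /allP H; apply/matrixP => i j; rewrite (ord1 i) mxE.
have /H : j \in index_enum 'I_n by rewrite mem_index_enum.
by rewrite /= mulf_eq0 orbb => /eqP.
Qed.

Lemma coord_le_norm (v : 'rV[R]_n) j : `|v ord0 j| <= `|v|.
Proof.
change (`|v ord0 j| <= mx_norm v); rewrite mx_normrE.
by apply/bigmax_geP; right; exists (ord0, j).
Qed.

Lemma norm_coord (v : 'rV[R]_n) : `|v| != 0 -> exists j, `|v| = `|v ord0 j|.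
Proof.
change (mx_norm v != 0 -> exists j, mx_norm v = `|v ord0 j|).
move=> /mx_norm_neq0 [[i j] ->].
by exists j; rewrite (ord1 i).
Qed.

Lemma q_norm_bound (v : 'rV[R]_n) (t : R) : 0 <= t -> q v <= t -> `|v| <= t + 1.
Proof.
move=> t0 qt; rewrite leNgt; apply/negP => H.
have /norm_coord [j Hj] : `|v| != 0 by apply: lt0r_neq0; apply: lt_trans H; lra.
have H2 := q_ge_coord v j.
have E : `|v ord0 j| * `|v ord0 j| = v ord0 j * v ord0 j.
  by rewrite -normrM ger0_norm // -expr2 sqr_ge0.
have H3 : t + 1 < `|v ord0 j| by rewrite -Hj.
have H4 : (t + 1) * (t + 1) < `|v ord0 j| * `|v ord0 j| by apply: ltr_pM => //; lra.
nra.
Qed.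


Arguments q_norm_bound {v t}.

Lemma q_cont : continuous q.
Proof.
rewrite /q /dot.
apply: (@continuous_big _ _ +%R 0 xpredT add_continuous) => j _ v.
by apply: continuousM; apply: coord_continuous.
Qed.

Lemma exists_min (X Y : set 'rV[R]_n) : X !=set0 -> Y !=set0 -> closed X -> closed Y ->
  [bounded y | y in Y] ->
  exists x' y', X x' /\ Y y' /\ forall x y, X x -> Y y -> q (x' - y') <= q (x - y).
Proof.
move=> [x0 Xx0] [y0 Yy0] cX cY hb.
have cYc : compact Y by exact: bounded_closed_compact.
have [M [Mreal HM]] := hb.
pose b := M + 1.
have Yb y : Y y -> `|y| <= b by move=> Yy; apply: (HM (M + 1)) => //; rewrite ltrDl.
pose m := q (x0 - y0).
have m0 : 0 <= m by exact: q_ge0.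
have b0 : 0 <= b by apply: le_trans (Yb _ Yy0).
pose B := b + m + 1.
have B0 : 0 < B by rewrite /B; lra.
pose Kx := X `&` closed_ball_ (@Num.norm _ _) (0 : 'rV[R]_n) B.
have inKx x : X x -> `|x| <= B -> Kx x.
  by move=> Xx hx; split => //; rewrite /closed_ball_ /= sub0r normrN.
have cKx : compact Kx.
  apply: bounded_closed_compact.
    exists B; split; first by rewrite realE ltW.
    move=> M' hM' x [_]; rewrite /closed_ball_ /= sub0r normrN => hx.
    by apply: le_trans hx _; apply: ltW.
  by apply: closedI => //; apply: closed_closed_ball_.
have cK : compact (Kx `*` Y) by exact: compact_setX.
pose f := fun p : 'rV[R]_n * 'rV[R]_n => q (p.1 - p.2).
have fc : continuous f.
  move=> p; apply: continuous_comp; first exact: sub_continuous.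
  exact: q_cont.
have nbd x y : Y y -> B < `|x| -> m < q (x - y).
  move=> Yy hx; rewrite ltNge; apply/negP => hq.
  have := q_norm_bound m0 hq => H.
  have := Yb _ Yy => Hy.
  have : `|x| <= `|x - y| + `|y|.
    by apply: le_trans (ler_normD _ _); rewrite subrK.
  rewrite /B in hx; lra.
have x0B : `|x0| <= B.
  have := q_norm_bound m0 (lexx m) => H.
  have := Yb _ Yy0 => Hy.
  have : `|x0| <= `|x0 - y0| + `|y0|.
    by apply: le_trans (ler_normD _ _); rewrite subrK.
  rewrite /B; lra.
have K0 : (Kx `*` Y) !=set0 by exists (x0, y0); split => //=; exact: inKx.
have fcK : {within Kx `*` Y, continuous f} by exact: continuous_subspaceT.
have [[xs ys] HK Hmin] := compact_EVT_min K0 cK fcK.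
move: HK; rewrite inE => -[Kxs Yys].
exists xs, ys; split; first by case: Kxs.
split => // x y Xx Yy.
have [hx|hx] := leP `|x| B.
  by apply: (Hmin (x, y)); rewrite inE; split => //=; apply: inKx.
apply: le_trans (ltW (nbd _ _ Yy hx)).
by apply: (Hmin (x0, y0)); rewrite inE; split => //=; apply: inKx.
Qed.


Lemma quad (a b : R) : 0 <= b ->
  (forall t, 0 < t <= 1 -> 0 <= 2 * t * a + t ^+ 2 * b) -> 0 <= a.
Proof.
move=> b0 H; rewrite leNgt; apply/negP => a0.
pose t := - a / (b - a).
have ba : 0 < b - a by lra.
have tE : t * (b - a) = - a by rewrite /t mulfVK //; apply: lt0r_neq0.
have t0 : 0 < t by rewrite /t divr_gt0 //; lra.
have t1 : t <= 1 by rewrite /t ler_pdivrMr //; lra.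
have := H t; rewrite t0 t1 => /(_ isT) H1.
have : t * b <= - a by nra.
move=> H2.
have : t * (t * b) <= t * (- a) by rewrite ler_pM2l.
rewrite expr2 in H1; nra.
Qed.

Lemma ereal_sep (g : 'rV[R]_n -> R) (X Y : set 'rV[R]_n) (d : R) : 0 < d ->
  X !=set0 -> Y !=set0 -> (forall x y, X x -> Y y -> g x + d <= g y) ->
  (ereal_sup [set (g x)%:E | x in X] < ereal_inf [set (g y)%:E | y in Y])%E.
Proof.
move=> d0 [x0 Xx0] [y0 Yy0] H.
have supub y : Y y -> (ereal_sup [set (g x)%:E | x in X] <= (g y - d)%:E)%E.
  move=> Yy; apply: ge_ereal_sup => _ [x Xx <-]; rewrite lee_fin.
  have := H x y Xx Yy; lra.
have supge : ((g x0)%:E <= ereal_sup [set (g x)%:E | x in X])%E.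
  by apply: ereal_sup_ubound; exists x0.
have [r hr] : exists r, ereal_sup [set (g x)%:E | x in X] = r%:E.
  move: (supub _ Yy0) supge.
  by case: (ereal_sup [set (g x)%:E | x in X]) => [r| |] //; exists r.
have infge : ((r + d)%:E <= ereal_inf [set (g y)%:E | y in Y])%E.
  apply: le_ereal_inf_tmp => _ [y Yy <-]; rewrite lee_fin.
  have := supub y Yy; rewrite hr lee_fin; lra.
rewrite hr; apply: lt_le_trans infge; rewrite lte_fin; lra.
Qed.

Lemma e1 (K : ringType) (V : lmodType K) (l : K) (p q : V) :
  l *: p + (1 - l) *: q = p + (1 - l) *: (q - p).
Proof.
rewrite scalerBr addrA addrC addrA; congr (_ + _).
by rewrite scalerBl scale1r opprB subrK.
Qed.
Lemma e2 (K : ringType) (V : lmodType K) (l : K) (p q : V) :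
  l *: p + (1 - l) *: q = q - l *: (q - p).
Proof. by rewrite scalerBr opprB scalerBl scale1r addrCA. Qed.
Lemma e3 (K : ringType) (V : lmodType K) (l : K) (p q : V) :
  l *: p + (1 - l) *: q = q + l *: (- (q - p)).
Proof. by have := @e1 _ _ (1 - l) q p; rewrite subKr opprB addrC. Qed.
Lemma e4 (K : ringType) (V : lmodType K) (l : K) (p q : V) :
  l *: p + (1 - l) *: q = p - (1 - l) *: (- (q - p)).
Proof. by have := @e2 _ _ (1 - l) q p; rewrite subKr opprB addrC. Qed.



Implicit Types (C F X Y : set 'rV[R]_n).

Definition C0 C (c : 'rV[R]_n) := c = 0 \/ C c.

Lemma scale_C0 C (t : R) d : is_cone C -> 0 <= t -> C d -> C0 C (t *: d).
Proof.
move=> hC t0 Cd; have [->|tn0] := eqVneq t 0; first by left; rewrite scale0r.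
by right; apply: hC => //; rewrite lt_def tn0 t0.
Qed.

Lemma pair_lemma C F p q (l : R) : is_cone C -> antichain_convex C F ->
  F p -> F q -> 0 <= l <= 1 ->
  (exists r c, F r /\ C0 C c /\ l *: p + (1 - l) *: q = r + c) /\
  (exists r c, F r /\ C0 C c /\ l *: p + (1 - l) *: q = r - c).
Proof.
move=> hC hF Fp Fq /andP[l0 l1].
have l1' : 0 <= 1 - l by rewrite subr_ge0.
have [H|H] := pselect (C (q - p) \/ C (- (q - p))).
  case: H => H.
  - split.
    + exists p, ((1 - l) *: (q - p)); split => //; split; first exact: scale_C0.
      exact: e1.
    + exists q, (l *: (q - p)); split => //; split; first exact: scale_C0.
      exact: e2.
  - split.
    + exists q, (l *: (- (q - p))); split => //; split; first exact: scale_C0.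
      exact: e3.
    + exists p, ((1 - l) *: (- (q - p))); split => //; split; first exact: scale_C0.
      exact: e4.
split.
- exists (l *: p + (1 - l) *: q), 0; split; first by apply: hF => //; rewrite l0.
  by split; [left|rewrite addr0].
- exists (l *: p + (1 - l) *: q), 0; split; first by apply: hF => //; rewrite l0.
  by split; [left|rewrite subr0].
Qed.


Arguments pair_lemma {C F p q l}.

Lemma P_sum C X k (c : 'I_k -> 'rV[R]_n) : upward C X ->
  (forall i, C0 C (c i)) -> forall x, X x -> X (x + \sum_i c i).
Proof.
move=> hX hc.
apply: (big_ind (fun v => forall x, X x -> X (x + v))).
- by move=> x Xx; rewrite addr0.
- by move=> a b Ha Hb x Xx; rewrite addrA; apply/Hb/Ha.
- move=> i _ x Xx; case: (hc i) => [->|Ci]; first by rewrite addr0.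
  exact: hX.
Qed.

Arguments P_sum {C X k c}.

Lemma mink_combo C k (F : 'I_k -> set 'rV[R]_n) x x' (l : R) :
  is_cone C -> (forall i, antichain_convex C (F i)) ->
  minkowski_sum F x -> minkowski_sum F x' -> 0 <= l <= 1 ->
  (exists r (c : 'I_k -> 'rV[R]_n), minkowski_sum F r /\ (forall i, C0 C (c i)) /\
     l *: x + (1 - l) *: x' = r + \sum_i c i) /\
  (exists r (c : 'I_k -> 'rV[R]_n), minkowski_sum F r /\ (forall i, C0 C (c i)) /\
     l *: x + (1 - l) *: x' = r - \sum_i c i).
Proof.
move=> hC hF [p [Fp ->]] [p' [Fp' ->]] hl.
have E : l *: (\sum_i p i) + (1 - l) *: (\sum_i p' i) =
         \sum_i (l *: p i + (1 - l) *: p' i).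
  by rewrite !scaler_sumr -big_split.
split.
- have /choice [f Hf] : forall i, exists rc : 'rV[R]_n * 'rV[R]_n,
      F i rc.1 /\ C0 C rc.2 /\ l *: p i + (1 - l) *: p' i = rc.1 + rc.2.
    move=> i; have [[r [c H]] _] := pair_lemma hC (hF i) (Fp i) (Fp' i) hl.
    by exists (r, c).
  exists (\sum_i (f i).1), (fun i => (f i).2); split.
    by exists (fun i => (f i).1); split => // i; case: (Hf i).
  split; first by move=> i; case: (Hf i) => _ [].
  rewrite E -big_split; apply: eq_bigr => i _; by case: (Hf i) => _ [].
- have /choice [f Hf] : forall i, exists rc : 'rV[R]_n * 'rV[R]_n,
      F i rc.1 /\ C0 C rc.2 /\ l *: p i + (1 - l) *: p' i = rc.1 - rc.2.
    move=> i; have [_ [r [c H]]] := pair_lemma hC (hF i) (Fp i) (Fp' i) hl.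
    by exists (r, c).
  exists (\sum_i (f i).1), (fun i => (f i).2); split.
    by exists (fun i => (f i).1); split => // i; case: (Hf i).
  split; first by move=> i; case: (Hf i) => _ [].
  rewrite E -sumrB; apply: eq_bigr => i _; by case: (Hf i) => _ [].
Qed.

Arguments mink_combo {C k F x x' l}.

Lemma Z_convex C X Y : is_cone C -> upward C X ->
  decomp_antichain_convex C X -> decomp_antichain_convex C Y ->
  forall x x' y y' (l : R), X x -> X x' -> Y y -> Y y' -> 0 <= l <= 1 ->
  exists x'' y'', X x'' /\ Y y'' /\
    l *: (x - y) + (1 - l) *: (x' - y') = x'' - y''.
Proof.
move=> hC hX [k [F [hF EX]]] [k' [G [hG EY]]] x x' y y' l Xx Xx' Yy Yy' hl.
rewrite EX in Xx Xx' hX *; rewrite EY in Yy Yy' *.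
have [[r [c [Fr [Cc Er]]]] _] := mink_combo hC hF Xx Xx' hl.
have [_ [s [d [Gs [Cd Es]]]]] := mink_combo hC hG Yy Yy' hl.
exists (r + \sum_i c i + \sum_i d i), s; split.
  by apply: (P_sum hX Cd); apply: (P_sum hX Cc).
split => //.
have -> : l *: (x - y) + (1 - l) *: (x' - y') =
   (l *: x + (1 - l) *: x') - (l *: y + (1 - l) *: y').
  by rewrite !scalerBr opprD !addrA; congr (_ + _); rewrite -!addrA; congr (_ + _); rewrite addrC.
by rewrite Er Es opprB !addrA.
Qed.



Lemma sep (X Y : set 'rV[R]_n) : X !=set0 -> Y !=set0 -> closed X -> closed Y ->
  [bounded y | y in Y] -> X `&` Y = set0 ->
  (forall x x' y y' (l : R), X x -> X x' -> Y y -> Y y' -> 0 <= l <= 1 ->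
    exists x'' y'', X x'' /\ Y y'' /\
      l *: (x - y) + (1 - l) *: (x' - y') = x'' - y'') ->
  strictly_separated X Y.
Proof.
move=> X0 Y0 cX cY hb hXY Zc.
have [xs [ys [Xxs [Yys Hmin]]]] := exists_min _ _ X0 Y0 cX cY hb.
pose zs := xs - ys.
have d0 : 0 < q zs.
  rewrite lt_def q_ge0 andbT; apply/eqP => /q_eq0 /eqP; rewrite subr_eq0 => /eqP E.
  have : (X `&` Y) xs by split => //; rewrite E.
  by rewrite hXY.
have key x y : X x -> Y y -> q zs <= dot zs (x - y).
  move=> Xx Yy.
  suff : 0 <= dot zs ((x - y) - zs) by rewrite dotBr subr_ge0.
  apply: (quad _ _ (q_ge0 ((x - y) - zs))) => t /andP[t0 t1].
  have tl : 0 <= t <= 1 by rewrite (ltW t0) t1.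
  have [x'' [y'' [Xx'' [Yy'' E]]]] := Zc x xs y ys t Xx Xxs Yy Yys tl.
  have := Hmin x'' y'' Xx'' Yy''.
  rewrite -E e3 opprB q_expand => H.
  by rewrite -(lerD2l (q zs)) addr0 addrA.
exists (dot (- zs) : {linear 'rV[R]_n -> R^o}).
apply: (@ereal_sep _ X Y _ d0 X0 Y0) => x y Xx Yy /=.
have := key x y Xx Yy; rewrite !dotNl dotBr; lra.
Qed.

End Ana.

Lemma negC_cone (R : realType) (n : nat) (C : set 'rV[R]_n) :
  is_cone C -> is_cone [set c | C (- c)].
Proof. by move=> hC l c l0 Cc /=; rewrite -scalerN; apply: hC. Qed.

Lemma negC_ac (R : realType) (n : nat) (C S : set 'rV[R]_n) :
  antichain_convex C S -> antichain_convex [set c | C (- c)] S.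
Proof.
move=> h x y l Sx Sy hl H; apply: h => // H'; apply: H => /=.
by rewrite opprK; case: H' => H'; [right|left].
Qed.

Lemma negC_dac (R : realType) (n : nat) (C S : set 'rV[R]_n) :
  decomp_antichain_convex C S -> decomp_antichain_convex [set c | C (- c)] S.
Proof.
move=> [k [F [hF ->]]]; exists k, F; split => // i; exact: negC_ac.
Qed.

Theorem corollary3 (R : realType) (n : nat) (C X Y : set 'rV[R]_n) :
  is_cone C ->
  X !=set0 -> Y !=set0 ->
  closed X -> closed Y ->
  decomp_antichain_convex C X -> decomp_antichain_convex C Y ->
  [bounded y | y in Y] ->
  X `&` Y = set0 ->
  (upward C X -> strictly_separated X Y) /\
  (downward C X -> strictly_separated X Y).
Proof.
move=> hC X0 Y0 cX cY dX dY hb hXY; split => hup.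
  apply: (@sep R n X Y X0 Y0 cX cY hb hXY).
  exact: (@Z_convex R n C X Y hC hup dX dY).
apply: (@sep R n X Y X0 Y0 cX cY hb hXY).
apply: (@Z_convex R n [set c | C (- c)] X Y (negC_cone _ _ _ hC)).
- by move=> x c Xx /= Cc; rewrite -[c]opprK; apply: hup.
- exact: negC_dac.
- exact: negC_dac.
Qed.
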